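(* Let $\Sigma$ be a finitary signature, $X$ a set, and fix $p\in X\cup\Sigma_0$. Consider the set $\Psi_\Sigma X$ of all $\Sigma$-trees over $X$, ordered by cutting. Then every strictly increasing sequence $s_0<s_1<s_2<\cdots$ in $\Psi_\Sigma X$ consists of finite trees (i.e. lies in $\Phi_\Sigma X$), and it has exactly one upper bound in $\Psi_\Sigma X$.
   Context: A finitary signature is a sequence $\Sigma=(\Sigma_n)_{n\in\mathbb N}$ of sets ($\Sigma_n$ = $n$-ary operation symbols). A $\Sigma$-tree is an ordered (planar) rooted tree, finite or infinite, whose nodes are labelled in $\bigcup_n\Sigma_n$ such that a node labelled by $\sigma\in\Sigma_n$ has exactly $n$ children; trees are considered up to isomorphism. For a set $X$, a $\Sigma$-tree over $X$ is a $(\Sigma+X)$-tree where the elements of $X$ are added as nullary symbols. $\Psi_\Sigma X$ is the set of all $\Sigma$-trees over $X$ and $\Phi_\Sigma X\subseteq\Psi_\Sigma X$ the set of finite ones. For a tree $t$ and $n\in\mathbb N$, the cutting $\partial_n t$ is the tree obtained from $t$ by deleting all nodes of height $>n$ and relabelling all remaining nodes of height $n$ (which are now leaves) by $p$ (the root has height $0$). The order by cutting on $\Psi_\Sigma X$: $s\le s'$ iff $s=s'$ or $s=\partial_n s'$ for some $n\in\mathbb N$. *)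

(* Defs.v *)
(* Sigma-trees represented canonically as partial labelling
   functions on positions (Dewey addresses), which is exactly one
   representative per isomorphism class of ordered rooted trees. *)
From Stdlib Require Import List Arith.
Import ListNotations.

(* A finitary signature: a type of operation symbols with arities;
   Sigma_n = { s | ar s = n }. *)

Definition label (Sig X : Type) := (Sig + X)%type.

Definition larity {Sig X : Type} (ar : Sig -> nat) (l : label Sig X) : nat :=
  match l with inl s => ar s | inr _ => 0 end.

(* A position is a list of child indices from the root; its height is its
   length.  A tree assigns to each position its label, or None if the
   position is not a node. *)
Definition pretree (Sig X : Type) := list nat -> option (label Sig X).

Definition is_tree {Sig X : Type} (ar : Sig -> nat) (t : pretree Sig X) : Prop :=
  t [] <> None /\
  forall (w : list nat) (i : nat),
    t (w ++ [i]) <> None <-> exists l, t w = Some l /\ i < larity ar l.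

Definition finite_tree {Sig X : Type} (t : pretree Sig X) : Prop :=
  exists nodes : list (list nat), forall w, t w <> None -> In w nodes.

Definition cut {Sig X : Type} (p : label Sig X) (n : nat) (t : pretree Sig X)
  : pretree Sig X :=
  fun w =>
    if length w <? n then t w
    else if length w =? n then
      match t w with Some _ => Some p | None => None end
    else None.

Definition cut_le {Sig X : Type} (p : label Sig X) (s s' : pretree Sig X) : Prop :=
  s = s' \/ exists n, s = cut p n s'.

Definition cut_lt {Sig X : Type} (p : label Sig X) (s s' : pretree Sig X) : Prop :=
  cut_le p s s' /\ s <> s'.

(* Main.v *)
Require Import Defs.
From Stdlib Require Import List Arith Lia FunctionalExtensionality IndefiniteDescription.
Import ListNotations.

Lemma cut_cut {Sig X : Type} (p : label Sig X) m n (t : pretree Sig X) :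
  m <= n -> cut p n (cut p m t) = cut p m t.
Proof.
  intros H. extensionality w. unfold cut.
  destruct (Nat.ltb_spec (length w) n), (Nat.eqb_spec (length w) n),
    (Nat.ltb_spec (length w) m), (Nat.eqb_spec (length w) m);
    try lia; try reflexivity; destruct (t w); reflexivity.
Qed.

Fixpoint lev {Sig X : Type} (ar : Sig -> nat) (t : pretree Sig X) (k : nat)
  : list (list nat) :=
  match k with
  | 0 => [[]]
  | S k => flat_map (fun w => match t w with
                              | Some l => map (fun i => w ++ [i]) (seq 0 (larity ar l))
                              | None => [] end) (lev ar t k)
  end.

Lemma lev_in {Sig X : Type} (ar : Sig -> nat) (t : pretree Sig X) :
  is_tree ar t -> forall w, t w <> None -> In w (lev ar t (length w)).
Proof.
  intros [_ Ht] w. induction w as [|i w IH] using rev_ind.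
  - intros _. simpl. auto.
  - intros Hw. rewrite length_app. simpl. rewrite Nat.add_1_r. simpl.
    apply Ht in Hw. destruct Hw as [l [Hl Hi]].
    apply in_flat_map. exists w. split.
    + apply IH. rewrite Hl. discriminate.
    + rewrite Hl. apply (in_map (fun j => w ++ [j])). apply in_seq. lia.
Qed.

Lemma finite_of_bound {Sig X : Type} (ar : Sig -> nat) (t : pretree Sig X) n :
  is_tree ar t -> (forall w, t w <> None -> length w <= n) -> finite_tree t.
Proof.
  intros Ht Hb. exists (flat_map (lev ar t) (seq 0 (S n))).
  intros w Hw. apply in_flat_map. exists (length w). split.
  - apply in_seq. specialize (Hb w Hw). lia.
  - apply lev_in; auto.
Qed.

Theorem mainTheorem1 (Sig X : Type) (ar : Sig -> nat)
  (p : label Sig X) (hp : larity ar p = 0)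
  (s : nat -> pretree Sig X)
  (hs : forall i, is_tree ar (s i))
  (hinc : forall i j, i < j -> cut_lt p (s i) (s j)) :
  (forall i, finite_tree (s i)) /\
  (exists u, (is_tree ar u /\ forall i, cut_le p (s i) u) /\
     forall v, is_tree ar v -> (forall i, cut_le p (s i) v) -> v = u).
Proof.
  assert (hN0 : forall i, exists n, s i = cut p n (s (S i))).
  { intros i. destruct (hinc i (S i) ltac:(lia)) as [[E|[n E]] neq].
    - contradiction.
    - eauto. }
  destruct (functional_choice _ hN0) as [N hN].
  assert (hne : forall i, s i <> s (S i)).
  { intros i. destruct (hinc i (S i) ltac:(lia)) as [_ neq]. exact neq. }
  assert (Nlt : forall i, N i < N (S i)).
  { intros i. destruct (Nat.lt_ge_cases (N i) (N (S i))) as [H|H]; auto.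
    exfalso. apply (hne i).
    transitivity (cut p (N i) (cut p (N (S i)) (s (S (S i))))).
    { rewrite <- (hN (S i)). apply hN. }
    rewrite cut_cut by exact H. symmetry. apply hN. }
  assert (Nmono : forall i d, N i <= N (i + d)).
  { intros i d. induction d. rewrite Nat.add_0_r; lia.
    specialize (Nlt (i + d)). rewrite Nat.add_succ_r. lia. }
  assert (Nge : forall i, i <= N i).
  { induction i. lia. specialize (Nlt i). lia. }
  assert (step : forall k w, length w < N k -> s k w = s (S k) w).
  { intros k w Hw. assert (E := f_equal (fun f => f w) (hN k)). simpl in E.
    unfold cut in E. destruct (Nat.ltb_spec (length w) (N k)); [exact E|lia]. }
  assert (agree : forall i d w, length w < N i -> s i w = s (i + d) w).
  { intros i d w Hw. induction d. rewrite Nat.add_0_r; reflexivity.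
    rewrite IHd, Nat.add_succ_r. apply step. specialize (Nmono i d). lia. }
  assert (agree2 : forall i j w, i <= j -> length w < N i -> s i w = s j w).
  { intros i j w Hij Hw. replace j with (i + (j - i)) by lia. apply agree; auto. }
  set (u := fun w => s (S (length w)) w).
  assert (uagree : forall j w, S (length w) <= j -> s j w = u w).
  { intros j w Hj. unfold u. symmetry. apply agree2; auto.
    }
  assert (hcut : forall i, s i = cut p (N i) u).
  { intros i. extensionality w. unfold cut.
    assert (E := f_equal (fun f => f w) (hN i)). simpl in E. unfold cut in E.
    destruct (Nat.ltb_spec (length w) (N i)).
    - destruct (Nat.le_gt_cases (S (length w)) i).
      + apply uagree; auto.
      + unfold u. apply agree2; [lia|]. specialize (Nge (S (length w))). lia.
    - destruct (Nat.eqb_spec (length w) (N i)).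
      + rewrite E. rewrite (agree2 (S i) (S (length w))); [|specialize (Nge i); lia|].
        * reflexivity.
        * specialize (Nlt i). lia.
      + exact E. }
  split.
  - intros i. apply (finite_of_bound ar (s i) (N i)); auto.
    intros w Hw. rewrite hcut in Hw. unfold cut in Hw.
    destruct (Nat.ltb_spec (length w) (N i)); [lia|].
    destruct (Nat.eqb_spec (length w) (N i)); [lia|]. congruence.
  - exists u. split; [split|].
    + split.
      * rewrite <- (uagree 1 []) by (simpl; lia). apply (hs 1).
      * intros w i.
        rewrite <- (uagree (S (S (length w))) (w ++ [i]))
          by (rewrite length_app; simpl; lia).
        rewrite <- (uagree (S (S (length w))) w) by lia.
        apply (hs _).
    + intros i. right. exists (N i). apply hcut.
    + intros v Hv Hle. extensionality w.
      set (i := S (length w)).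
      destruct (Hle (S i)) as [E|[m E]].
      * rewrite <- E. apply uagree. unfold i. lia.
      * destruct (Nat.le_gt_cases m (N i)).
        -- exfalso. apply (hne i). transitivity (cut p (N i) (cut p m v)).
           { rewrite <- E. apply hN. }
           rewrite cut_cut by auto. symmetry. exact E.
        -- rewrite <- (uagree (S i) w) by (unfold i; lia).
           rewrite E. unfold cut.
           destruct (Nat.ltb_spec (length w) m); [reflexivity|].
           specialize (Nge i). unfold i in *. lia.
Qed.
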